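(* Let $d$ be a prime (possibly $d=2$), $n\in\mathbb{N}$, $A$ a multiplicative abelian group with an embedding $\zeta:\mathbb{Z}_d\to A$ such that every element $a\in\zeta(\mathbb{Z}_d)$ has a square root in $A$ (an element $b\in A$ with $b^2=a$), and let $W_1,W_2\in M_n(\mathbb{Z}_d)$ be such that $\Omega_i=W_i-W_i^T$ has full rank over $\mathbb{Z}_d$ for $i=1,2$. Then the polar commutator groups $\mathcal{G}_d^n(A,\zeta,W_1)$ and $\mathcal{G}_d^n(A,\zeta,W_2)$ are isomorphic.
   Context: An embedding $\zeta:\mathbb{Z}_d\to A$ is an injective group homomorphism. Let $F\subseteq A$ be a fixed set of representatives of $A/\zeta(\mathbb{Z}_d)$ with $1\in F$, and $r:A\to F$, $u:A\to\mathbb{Z}_d$ the maps with $a=r(a)\zeta(u(a))$. For $W\in M_n(\mathbb{Z}_d)$, $\mathcal{G}_d^n(A,\zeta,W)$ is the set $F\times\mathbb{Z}_d\times\mathbb{Z}_d^n$ with multiplication $(a,p,x)\cdot(b,q,y)=(r(ab),\,u(ab)+p+q+x^TWy,\,x+y)$. *)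

(* Defs.v *)
From HB Require Import structures.
From mathcomp Require Import all_boot all_order all_algebra.
Set Implicit Arguments. Unset Strict Implicit. Unset Printing Implicit Defensive.
Import Order.TTheory GRing.Theory Num.Theory.
Local Open Scope ring_scope.

(* The abelian group A is written additively (zmodType): the paper's
   product ab is a + b, its unit 1 is 0, and b^2 is b + b.
   Z_d (d prime) is 'F_d; Z_d^n is the type of column vectors 'cV['F_d]_n. *)

(* Elements of A x Z_d x Z_d^n; the polar commutator group G_d^n(A,zeta,W)
   is the subset of triples whose first component lies in F. *)
Definition Gtriple (A : zmodType) (d n : nat) : Type :=
  (A * 'F_d * 'cV['F_d]_n)%type.

Definition Gcarrier (A : zmodType) (d n : nat) (F : A -> Prop)
  (g : Gtriple A d n) : Prop := F g.1.1.

Definition Gmul (A : zmodType) (d n : nat) (r : A -> A) (u : A -> 'F_d)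
  (W : 'M['F_d]_n) (g h : Gtriple A d n) : Gtriple A d n :=
  let: (a, p, x) := g in
  let: (b, q, y) := h in
  (r (a + b), u (a + b) + p + q + (x^T *m W *m y) 0 0, x + y).

Definition Giso (A : zmodType) (d n : nat) (F : A -> Prop)
  (mul1 mul2 : Gtriple A d n -> Gtriple A d n -> Gtriple A d n) : Prop :=
  exists phi : Gtriple A d n -> Gtriple A d n,
    [/\ (forall g, Gcarrier F g -> Gcarrier F (phi g)),
        (forall g h, Gcarrier F g -> Gcarrier F h -> phi g = phi h -> g = h),
        (forall h, Gcarrier F h -> exists2 g, Gcarrier F g & phi g = h)
      & (forall g h, Gcarrier F g -> Gcarrier F h ->
           phi (mul1 g h) = mul2 (phi g) (phi h))].

(* Main.v *)
Require Import Defs.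
From HB Require Import structures.
From mathcomp Require Import all_boot all_order all_algebra.
From mathcomp Require Import zify ring.
Import GRing.Theory.
Local Open Scope ring_scope.

Module Helpers.
Set Implicit Arguments. Unset Strict Implicit. Unset Printing Implicit Defensive.

Section Sympl.
Variables (K : fieldType) (n : nat) (O : 'M[K]_n).
Hypothesis OT : O^T = - O.
Hypothesis Ov : forall v : 'rV_n, v *m O *m v^T = 0.
Hypothesis Ou : O \in unitmx.

Definition Bf m p (X : 'M_(m, n)) (Y : 'M_(p, n)) := X *m O *m Y^T.

Lemma BT m p (X : 'M_(m, n)) (Y : 'M_(p, n)) : (Bf X Y)^T = - Bf Y X.
Proof. by rewrite /Bf !trmx_mul trmxK OT mulNmx mulmxN mulmxA. Qed.

Lemma BT' m p (X : 'M_(m, n)) (Y : 'M_(p, n)) : Bf Y X = - (Bf X Y)^T.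
Proof. by rewrite BT opprK. Qed.

Lemma BmulL m p q (X : 'M_(m, p)) (Y : 'M_(p, n)) (Z : 'M_(q, n)) :
  Bf (X *m Y) Z = X *m Bf Y Z.
Proof. by rewrite /Bf !mulmxA. Qed.

Lemma BmulR m p q (X : 'M_(m, n)) (Y : 'M_(q, p)) (Z : 'M_(p, n)) :
  Bf X (Y *m Z) = Bf X Z *m Y^T.
Proof. by rewrite /Bf trmx_mul !mulmxA. Qed.

Lemma BDl m p (X1 X2 : 'M_(m, n)) (Y : 'M_(p, n)) :
  Bf (X1 + X2) Y = Bf X1 Y + Bf X2 Y.
Proof. by rewrite /Bf !mulmxDl. Qed.
Lemma BBl m p (X1 X2 : 'M_(m, n)) (Y : 'M_(p, n)) :
  Bf (X1 - X2) Y = Bf X1 Y - Bf X2 Y.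
Proof. by rewrite /Bf !mulmxBl. Qed.
Lemma BDr m p (X : 'M_(m, n)) (Y1 Y2 : 'M_(p, n)) :
  Bf X (Y1 + Y2) = Bf X Y1 + Bf X Y2.
Proof. by rewrite /Bf linearD /= mulmxDr. Qed.
Lemma BBr m p (X : 'M_(m, n)) (Y1 Y2 : 'M_(p, n)) :
  Bf X (Y1 - Y2) = Bf X Y1 - Bf X Y2.
Proof. by rewrite /Bf linearB /= mulmxBr. Qed.

Lemma Bcol m1 m2 p1 p2 (X1 : 'M_(m1, n)) (X2 : 'M_(m2, n))
   (Y1 : 'M_(p1, n)) (Y2 : 'M_(p2, n)) :
  Bf (col_mx X1 X2) (col_mx Y1 Y2) =
  block_mx (Bf X1 Y1) (Bf X1 Y2) (Bf X2 Y1) (Bf X2 Y2).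
Proof. by rewrite /Bf block_mxEv tr_col_mx !mul_col_mx !mul_mx_row. Qed.

Definition symp k (E Fm : 'M_(k, n)) :=
  [/\ Bf E E = 0, Bf Fm Fm = 0 & Bf E Fm = 1%:M].

Definition Jm k : 'M[K]_(k + k) := block_mx 0 1%:M (- 1%:M) 0.

Lemma symp_J k (E Fm : 'M_(k, n)) : symp E Fm -> Bf (col_mx E Fm) (col_mx E Fm) = Jm k.
Proof.
case=> h1 h2 h3; rewrite Bcol h1 h2 h3 /Jm; congr block_mx.
by rewrite BT' h3 tr_scalar_mx.
Qed.

Lemma Jm_unit k : Jm k \in unitmx.
Proof.
suff : Jm k *m (- Jm k) = 1%:M by case/mulmx1_unit.
rewrite /Jm -[- block_mx _ _ _ _]scaleN1r scale_block_mx mulmx_block.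
rewrite ?mulmx0 ?mul0mx ?add0r ?addr0 ?mulmxN ?mulNmx ?mulmx1 ?scaleN1r ?opprK ?oppr0.
rewrite ?mulmx0 ?mul0mx ?add0r ?addr0 ?mulmxN ?mulNmx ?mulmx1 ?scaleN1r ?opprK ?oppr0.
by rewrite scalar_mx_block.
Qed.

Lemma symp_rank k (E Fm : 'M_(k, n)) : symp E Fm -> \rank (col_mx E Fm) = (k + k)%N.
Proof.
move=> hs; apply/eqP; rewrite eqn_leq rank_leq_row /=.
have h := mxrank_unit (Jm_unit k); rewrite -(symp_J hs) /Bf in h.
rewrite -[X in (X <= _)%N]h.
exact: leq_trans (mxrankM_maxl _ _) (mxrankM_maxl _ _).
Qed.

Lemma symp_le k (E Fm : 'M_(k, n)) : symp E Fm -> (k + k <= n)%N.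
Proof. by move=> hs; rewrite -(symp_rank hs) rank_leq_col. Qed.

Lemma symp_ext k (E Fm : 'M_(k, n)) : (k + k < n)%N -> symp E Fm ->
  exists E' F' : 'M_(1 + k, n), symp E' F'.
Proof.
move=> hk [hEE hFF hEF].
have hFE : Bf Fm E = - 1%:M by rewrite BT' hEF tr_scalar_mx.
set C := O *m (col_mx E Fm)^T.
have : (0 < \rank (kermx C))%N.
  by rewrite mxrank_ker; have := rank_leq_col C; lia.
rewrite lt0n mxrank_eq0 => /eqP hK.
have [i hi] : exists i, row i (kermx C) != 0.
  apply/existsP; apply: contraT; rewrite negb_exists => /forallP hall.
  case: hK; apply/row_matrixP => i; rewrite row0; apply/eqP; have := hall i; rewrite negbK; exact.
set e := row i (kermx C).
have heC : e *m C = 0 by apply/sub_kermxP; exact: row_sub.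
have : row_mx (Bf e E) (Bf e Fm) = row_mx 0 0.
  by rewrite row_mx0 -heC /C /Bf tr_col_mx !mul_mx_row !mulmxA.
case/eq_row_mx => heE heF.
have hEe : Bf E e = 0 by rewrite BT' heE trmx0 oppr0.
have hFe : Bf Fm e = 0 by rewrite BT' heF trmx0 oppr0.
have heO : e *m O != 0.
  apply: contra hi => /eqP h; apply/eqP.
  have := mulmxK Ou e; rewrite h mul0mx => h'; exact: (esym h').
have [j hj] : exists j, (e *m O) 0 j != 0.
  apply/existsP; apply: contraT; rewrite negb_exists => /forallP hall.
  case/negP: heO; apply/eqP/matrixP => a b.
  by rewrite (ord1 a) [RHS]mxE; apply/eqP; have := hall b; rewrite negbK; exact.
set a := (e *m O) 0 j.
set w := a^-1 *: (delta_mx 0 j : 'rV[K]_n).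
have hew : Bf e w = 1%:M.
  rewrite /Bf /w linearZ /= -scalemxAr trmx_delta -colE.
  by rewrite [col _ _]mx11_scalar mxE -/a scale_scalar_mx mulVf ?hj.
set f := w - Bf w Fm *m E + Bf w E *m Fm.
have hfE : Bf f E = 0.
  by rewrite /f BDl BBl !BmulL hEE hFE mulmx0 subr0 mulmxN mulmx1 subrr.
have hfF : Bf f Fm = 0.
  by rewrite /f BDl BBl !BmulL hEF hFF mulmx0 addr0 mulmx1 subrr.
have hEf : Bf E f = 0 by rewrite BT' hfE trmx0 oppr0.
have hFf : Bf Fm f = 0 by rewrite BT' hfF trmx0 oppr0.
have hef : Bf e f = 1%:M.
  by rewrite /f BDr BBr !BmulR heE heF !mul0mx subr0 addr0.
exists (col_mx e E), (col_mx f Fm); split.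
- by rewrite Bcol heE hEe hEE (Ov e : Bf e e = 0) block_mx0.
- by rewrite Bcol hfF hFf hFF (Ov f : Bf f f = 0) block_mx0.
- by rewrite Bcol hef heF hEf hEF -scalar_mx_block.
Qed.

Lemma symp_exists j : (j + j <= n)%N -> exists E Fm : 'M_(j, n), symp E Fm.
Proof.
elim: j => [|j IH] hj.
  by exists 0, 0; split; apply/matrixP => -[].
have [E [Fm hs]] := IH ltac:(lia).
exact: (symp_ext (ltac:(lia) : (j + j < n)%N) hs).
Qed.

Lemma symp_full : exists k, exists E Fm : 'M_(k, n), symp E Fm /\ n = (k + k)%N.
Proof.
have hk : (n./2 + n./2 <= n)%N by have := odd_double_half n; rewrite -addnn; lia.
have [E [Fm hs]] := symp_exists hk.
exists n./2, E, Fm; split => //.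
have := odd_double_half n; rewrite -addnn.
case: (odd n) => /= h; last by lia.
have [E' [F' hs']] := symp_ext (ltac:(lia) : (n./2 + n./2 < n)%N) hs.
have := symp_le hs'; lia.
Qed.

End Sympl.

Lemma mx11_tr (K : nzRingType) (A : 'M[K]_1) : A^T = A.
Proof. by rewrite [A]mx11_scalar tr_scalar_mx. Qed.

Lemma alt_props (K : fieldType) n (W : 'M[K]_n) : \rank (W - W^T) = n ->
  [/\ (W - W^T)^T = - (W - W^T), (forall v : 'rV_n, v *m (W - W^T) *m v^T = 0)
    & (W - W^T) \in unitmx].
Proof.
move=> hr; split.
- by rewrite linearB /= trmxK opprB.
- move=> v; rewrite mulmxBr mulmxBl.
  have -> : v *m W^T *m v^T = (v *m W *m v^T)^T by rewrite !trmx_mul trmxK mulmxA.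
  by rewrite mx11_tr subrr.
- by rewrite -row_free_unit /row_free hr.
Qed.

Lemma alt_cong (K : fieldType) n (W1 W2 : 'M[K]_n) :
  \rank (W1 - W1^T) = n -> \rank (W2 - W2^T) = n ->
  exists N : 'M_n, N \in unitmx /\ W1 - W1^T = N *m (W2 - W2^T) *m N^T.
Proof.
move=> h1 h2.
have [OT1 Ov1 Ou1] := alt_props h1.
have [OT2 Ov2 Ou2] := alt_props h2.
set O1 := W1 - W1^T in OT1 Ov1 Ou1 h1 *.
set O2 := W2 - W2^T in OT2 Ov2 Ou2 h2 *.
have [k1 [E1 [F1 [hs1 hn1]]]] := symp_full OT1 Ov1 Ou1.
have [k2 [E2 [F2 [hs2 hn2]]]] := symp_full OT2 Ov2 Ou2.
have ek : k2 = k1 by lia.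
subst k2.
have J1 := symp_J OT1 hs1. have J2 := symp_J OT2 hs2.
have r1 := symp_rank OT1 hs1.
have : row_full (col_mx E1 F1) by rewrite /row_full r1 -hn1.
case/row_fullP => Q1 hQ1.
set P1 := col_mx E1 F1 in J1 hQ1.
set P2 := col_mx E2 F2 in J2.
have eO : O1 = (Q1 *m P2) *m O2 *m (Q1 *m P2)^T.
  have -> : O1 = (Q1 *m P1) *m O1 *m (Q1 *m P1)^T by rewrite hQ1 trmx1 mul1mx mulmx1.
  have hA : forall (P : 'M_(k1 + k1, n)) (O : 'M_n),
      Q1 *m P *m O *m (Q1 *m P)^T = Q1 *m (P *m O *m P^T) *m Q1^T.
    by move=> P O; rewrite trmx_mul !mulmxA.
  rewrite !hA; move: J1 J2; rewrite /Bf => -> ->; done.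
exists (Q1 *m P2); split => //.
rewrite -row_free_unit /row_free eqn_leq rank_leq_row /=.
have h := mxrank_unit Ou1; rewrite eO in h.
rewrite -[X in (X <= _)%N]h.
exact: leq_trans (mxrankM_maxl _ _) (mxrankM_maxl _ _).
Qed.

Lemma F2_cases d (t : 'F_d) : d = 2%N -> t = 0 \/ t = 1.
Proof. move=> hd; subst d; by case: t => [[|[|m]] hm]; [left|right|]; try apply/val_inj. Qed.

Lemma F2_11 d : d = 2%N -> (1 + 1 : 'F_d) = 0.
Proof. move=> hd; subst d; by apply/val_inj. Qed.

Lemma scalar_cocycle (d : nat) (A : zmodType) (zeta : 'F_d -> A) :
  prime d -> (forall p q, zeta (p + q) = zeta p + zeta q) ->
  (forall p, exists b : A, b + b = zeta p) ->
  exists H : 'F_d -> 'F_d -> A, forall s a b : 'F_d, H s (a + b) = H s a + H s b + zeta (s * a * b).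
Proof.
move=> hp zD0 hsq.
have zD : forall p q : 'F_d, zeta (p + q) = zeta p + zeta q := zD0.
have z0 : zeta 0 = 0 by apply/(addrI (zeta 0)); rewrite -zD !addr0.
have [d2|d2] := eqVneq d 2.
  have cs : forall s, exists b : A, b + b == zeta s.
    by move=> s; have [b hb] := hsq s; exists b; apply/eqP.
  exists (fun s t => if t == 0 then 0 else xchoose (cs s)) => s a b.
  have /eqP hc := xchooseP (cs s).
  case: (F2_cases a d2) => ->; first by rewrite ?add0r ?eqxx ?add0r ?mulr0 ?mul0r z0 addr0.
  case: (F2_cases b d2) => ->; first by rewrite ?addr0 ?eqxx ?addr0 ?mulr0 z0 addr0.
  rewrite (F2_11 d2) ?eqxx oner_eq0 hc !mulr1 -zD.
  have -> : s + s = 0 by rewrite -mulr2n -mulr_natr (etrans (congr1 (fun m => m%:R : 'F_d) (esym d2)) (pchar_Fp_0 hp)) mulr0.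
  by rewrite z0.
have h2 : (2%:R : 'F_d) != 0.
  rewrite -(dvdn_pcharf (pchar_Fp hp)); apply: contra d2 => hd.
  have := dvdn_leq (isT : (0 < 2)%N) hd; have := prime_gt1 hp; lia.
exists (fun s t => zeta (s * t * t / 2%:R)) => s a b.
rewrite -!zD; congr zeta; field; exact: h2.
Qed.



Lemma mxDE (R : nmodType) m n (A B : 'M[R]_(m, n)) i j : (A + B) i j = A i j + B i j.
Proof. by rewrite mxE. Qed.

Lemma ac6 (A : zmodType) (a b c p q r : A) :
  a + b + c + (p + q + r) = a + p + (b + q) + (c + r).
Proof. by rewrite addrACA (addrACA a b p q). Qed.

Lemma mxBE (R : zmodType) m n (A B : 'M[R]_(m, n)) i j : (A - B) i j = A i j - B i j.
Proof. by rewrite !mxE. Qed.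

Lemma quad_cocycle (d : nat) (A : zmodType) (zeta : 'F_d -> A)
  (H : 'F_d -> 'F_d -> A) n (S : 'M['F_d]_n) :
  (forall p q : 'F_d, zeta (p + q) = zeta p + zeta q) ->
  (forall s a b : 'F_d, H s (a + b) = H s a + H s b + zeta (s * a * b)) ->
  S^T = S ->
  exists g : 'cV['F_d]_n -> A, forall x y,
    g (x + y) = g x + g y + zeta ((x^T *m S *m y) 0 0).
Proof.
move=> zD hH hS.
have z0 : zeta 0 = 0 by apply/(addrI (zeta 0)); rewrite -zD !addr0.
have zS : forall (I : finType) (f : I -> 'F_d), zeta (\sum_i f i) = \sum_i zeta (f i).
  by move=> I f; apply: (big_morph zeta zD z0).
set L : 'M['F_d]_n := \matrix_(i, j) (if (j < i)%N then S i j else 0).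
set D : 'M['F_d]_n := diag_mx (\row_i S i i).
have eS : S = L + L^T + D.
  apply/matrixP => i j; rewrite !mxE.
  have hSji : S j i = S i j by rewrite -[in RHS]hS mxE.
  case: (ltngtP i j) => h.
  - rewrite (ltn_eqF h : (i == j) = false) /= hSji; ring.
  - rewrite (gtn_eqF h : (i == j) = false) /=; ring.
  - have eij : i = j by apply/val_inj.
    subst j; rewrite eqxx /=.
    ring.
exists (fun x => zeta ((x^T *m L *m x) 0 0) + \sum_i H (S i i) (x i 0)) => x y.
have eq1 : ((x + y)^T *m L *m (x + y)) 0 0 =
   (x^T *m L *m x) 0 0 + (y^T *m L *m y) 0 0 + (x^T *m (L + L^T) *m y) 0 0.
  have e : (y^T *m L *m x) = (x^T *m L^T *m y).
    by rewrite -[LHS]mx11_tr !trmx_mul trmxK mulmxA.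
  rewrite [(x + y)^T]linearD /= !mulmxDl !mulmxDr e !mxDE ?mulmxDr ?mulmxDl ?mxDE; ring.
have eq2 : (x^T *m S *m y) 0 0 = (x^T *m (L + L^T) *m y) 0 0 + \sum_i S i i * x i 0 * y i 0.
  rewrite [in LHS]eS mulmxDr mulmxDl mxE; congr (_ + _).
  rewrite mul_mx_diag !mxE; apply: eq_bigr => i _; rewrite !mxE; ring.
have eq3 : \sum_i H (S i i) ((x + y) i 0) =
   \sum_i H (S i i) (x i 0) + \sum_i H (S i i) (y i 0) + \sum_i zeta (S i i * x i 0 * y i 0).
  rewrite -!big_split /=; apply: eq_bigr => i _; by rewrite mxE hH.
rewrite eq1 eq3 eq2 !zD zS.
exact: ac6.
Qed.
Lemma key_ac (A : zmodType) (a b R0 U0 P Q C1 C2 Gx Gy Sxy : A) :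
  a + b = R0 + U0 -> C2 = C1 + Sxy ->
  R0 + (U0 + P + Q + C1) + (Gx + Gy + Sxy) = a + P + Gx + (b + Q + Gy) + C2.
Proof.
move=> h1 ->; rewrite !addrA [RHS](ACl (1*4*2*5*7*3*6*8)) /= h1.
done.
Qed.
Lemma key2 (A : zmodType) (R u12 r1 r2 u1 u2 C : A) :
  R + u12 = r1 + r2 -> R + (u12 + u1 + u2 + C) = (r1 + u1) + (r2 + u2) + C.
Proof.
move=> h; rewrite !addrA h.
by rewrite [LHS](ACl (1*3*2*4*5)).
Qed.
Lemma zmod_id (V : zmodType) (W X Y : V) : Y - (W - (X - Y)) = X - W.
Proof. by rewrite opprB addrA (addrC Y) subrK. Qed.

End Helpers.
Import Helpers.

Theorem proposition23 (d n : nat) (A : zmodType) (zeta : 'F_d -> A)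
  (F : A -> Prop) (r : A -> A) (u : A -> 'F_d) (W1 W2 : 'M['F_d]_n) :
  prime d ->
  (* zeta is an embedding (injective homomorphism) *)
  (forall p q, zeta (p + q) = zeta p + zeta q) ->
  injective zeta ->
  (* every element of zeta(Z_d) has a square root in A *)
  (forall p, exists b : A, b + b = zeta p) ->
  (* F is a set of representatives of A / zeta(Z_d) containing the unit *)
  F 0 ->
  (forall a, exists f, F f /\ exists p, a = f + zeta p) ->
  (forall f1 f2 p1 p2, F f1 -> F f2 -> f1 + zeta p1 = f2 + zeta p2 -> f1 = f2) ->
  (* r and u: a = r(a) zeta(u(a)) with r(a) in F *)
  (forall a, F (r a) /\ a = r a + zeta (u a)) ->
  (* Omega_i = W_i - W_i^T has full rank *)
  \rank (W1 - W1^T) = n ->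
  \rank (W2 - W2^T) = n ->
  Giso F (Gmul r u W1) (Gmul r u W2).
Proof.
move=> hp zD0 zinj hsq F0 Frep Funiq hru h1 h2.
have zD : forall p q : 'F_d, zeta (p + q) = zeta p + zeta q := zD0.
have z0 : zeta 0 = 0 by apply/(addrI (zeta 0)); rewrite -zD !addr0.
have Lrep : forall f t, F f -> r (f + zeta t) = f /\ u (f + zeta t) = t.
  move=> f t hf; have [hF he] := hru (f + zeta t).
  have ef := Funiq _ _ _ _ hf hF he.
  split; first by rewrite -ef.
  by apply: zinj; move: he; rewrite -ef => /addrI.
have [N [Nu eN]] := alt_cong h1 h2.
set S := N *m W2 *m N^T - W1.
have hS : S^T = S.
  rewrite /S linearB /= !trmx_mul trmxK mulmxA.
  have -> : W1^T = W1 - (N *m W2 *m N^T - N *m W2^T *m N^T).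
    by rewrite -[X in W1 - X]mulmxBl -mulmxBr -eN opprB addrC subrK.
  exact: zmod_id.
have [H hH] := scalar_cocycle hp zD hsq.
have [G hG] := quad_cocycle zD hH hS.
set M := N^T.
have Mu : M \in unitmx by rewrite unitmx_tr.
pose phi (g : Gtriple A d n) : Gtriple A d n :=
  (r (g.1.1 + zeta g.1.2 + G g.2), u (g.1.1 + zeta g.1.2 + G g.2), M *m g.2).
exists phi; split.
- by move=> [[a p] x] _; rewrite /Gcarrier /=; exact: (hru _).1.
- move=> [[a1 p1] x1] [[a2 p2] x2]; rewrite /Gcarrier /phi /= => hF1 hF2 [e1 e2 e3].
  have ex : x1 = x2 by rewrite -(mulKmx Mu x1) e3 mulKmx.
  subst x2.
  have ez : a1 + zeta p1 + G x1 = a2 + zeta p2 + G x1.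
    by rewrite (hru (a1 + zeta p1 + G x1)).2 e1 e2 -(hru _).2.
  have e' : a1 + zeta p1 = a2 + zeta p2 by apply: (addIr (G x1)).
  have ea := Funiq _ _ _ _ hF1 hF2 e'.
  subst a2; move/addrI/zinj: e' => ->; done.
- move=> [[b q] y]; rewrite /Gcarrier /= => hb.
  set x := invmx M *m y.
  set z := b + zeta q - G x.
  exists (r z, u z, x); first by rewrite /Gcarrier /=; exact: (hru z).1.
  rewrite /phi /= -(hru z).2 /z subrK.
  have [-> ->] := Lrep b q hb.
  by rewrite /x mulKVmx.
- move=> [[a p] x] [[b q] y]; rewrite /Gcarrier /= => ha hb.
  rewrite /Gmul /phi /=.
  set z1 := a + zeta p + G x. set z2 := b + zeta q + G y.
  set c1 := (x^T *m W1 *m y) 0 0.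
  set c2 := ((M *m x)^T *m W2 *m (M *m y)) 0 0.
  have ec : c2 = c1 + (x^T *m S *m y) 0 0.
    rewrite /c2 /c1 /S /M !trmx_mul trmxK mulmxBr mulmxBl mxBE.
    by rewrite addrC subrK !mulmxA.
  set R := r (r z1 + r z2).
  set U := u (r z1 + r z2) + u z1 + u z2 + c2.
  have eZ : r (a + b) + zeta (u (a + b) + p + q + c1) + G (x + y) = R + zeta U.
    have hab : a + b = r (a + b) + zeta (u (a + b)) := (hru _).2.
    have hc' : zeta c2 = zeta c1 + zeta ((x^T *m S *m y) 0 0) by rewrite ec zD.
    rewrite hG !zD /U (key_ac _ _ _ _ hab hc').
    rewrite (key2 _ _ _ (esym (hru _).2)).
    by rewrite -(hru z1).2 -(hru z2).2.
  rewrite eZ; have [-> ->] := Lrep R U (hru _).1.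
  by rewrite mulmxDr.
Qed.
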